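(* Let $(X,\|\cdot\|)$ be an extended normed linear space and let $\tau_F$ be the finest locally convex topology of $X$. Then $(X,\tau_F)$ is metrizable if and only if $X/X_{fin}$ is finite dimensional, where $X_{fin}=\{x\in X:\|x\|<\infty\}$.
   Context: An extended norm on a vector space $X$ over $\mathbb{R}$ or $\mathbb{C}$ is a map $\|\cdot\|:X\to[0,\infty]$ with $\|x\|=0$ iff $x=0_X$, $\|\alpha x\|=|\alpha|\|x\|$, and $\|x+y\|\le\|x\|+\|y\|$; $X$ carries the topology with basic neighborhoods $\{y:\|y-x\|<\varepsilon\}$. A locally convex topology on $X$ is one induced by a family of finite-valued seminorms. The finest locally convex topology of $X$ is the locally convex topology $\tau_F$ coarser than the extended norm topology such that every locally convex topology coarser than the extended norm topology is coarser than $\tau_F$. *)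

(* Defs.v *)
From HB Require Import structures.
From mathcomp Require Import all_boot all_order all_algebra.
From mathcomp Require Import complex.
From mathcomp Require Import boolp classical_sets reals constructive_ereal.
Set Implicit Arguments. Unset Strict Implicit. Unset Printing Implicit Defensive.
Import Order.TTheory GRing.Theory Num.Theory.
Local Open Scope classical_set_scope.
Local Open Scope ring_scope.

(* Scalars: a field K (R or C = R[i]) with absolute value absK : K -> R.   *)
(* Topologies on a fixed carrier X are represented by their families of   *)
(* open sets (set (set X)), since X carries several topologies at once.    *)

Section Defs.
Variables (R : realType) (K : numFieldType) (absK : K -> R) (X : lmodType K).

Definition is_extended_norm (N : X -> \bar R) : Prop :=
  [/\ forall x, (0 <= N x)%E,
      forall x, N x = 0%E <-> x = 0,
      forall (a : K) x, N (a *: x) = ((absK a)%:E * N x)%E &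
      forall x y, (N (x + y)%R <= N x + N y)%E].

Definition enorm_topology (N : X -> \bar R) : set (set X) :=
  [set U | forall x, U x ->
     exists2 e : R, 0 < e & [set y | (N (y - x)%R < e%:E)%E] `<=` U].

Definition is_seminorm (p : X -> R) : Prop :=
  [/\ forall x, 0 <= p x,
      forall (a : K) x, p (a *: x) = absK a * p x &
      forall x y, p (x + y) <= p x + p y].

Definition seminorm_topology (P : set (X -> R)) : set (set X) :=
  [set U | forall x, U x ->
     exists (s : seq (X -> R)) (e : R),
       [/\ forall p, p \in s -> P p, 0 < e &
           [set y | forall p, p \in s -> p (y - x) < e] `<=` U]].

Definition locally_convex_topology (T : set (set X)) : Prop :=
  exists P : set (X -> R), (forall p, P p -> is_seminorm p) /\
                           T = seminorm_topology P.

Definition coarser (T1 T2 : set (set X)) : Prop := T1 `<=` T2.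

Definition finest_locally_convex_topology (N : X -> \bar R)
    (tauF : set (set X)) : Prop :=
  [/\ locally_convex_topology tauF,
      coarser tauF (enorm_topology N) &
      forall T, locally_convex_topology T -> coarser T (enorm_topology N) ->
        coarser T tauF].

Definition is_metric (d : X -> X -> R) : Prop :=
  [/\ forall x y, 0 <= d x y,
      forall x y, d x y = 0 <-> x = y,
      forall x y, d x y = d y x &
      forall x y z, d x z <= d x y + d y z].

Definition metric_topology (d : X -> X -> R) : set (set X) :=
  [set U | forall x, U x ->
     exists2 e : R, 0 < e & [set y | d x y < e] `<=` U].

Definition metrizable (T : set (set X)) : Prop :=
  exists d, is_metric d /\ T = metric_topology d.

Definition Xfin (N : X -> \bar R) : set X := [set x | (N x < +oo)%E].

(* X / X_fin is finite dimensional: finitely many cosets span X / X_fin *)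
Definition finite_dim_quotient (N : X -> \bar R) : Prop :=
  exists (n : nat) (v : 'I_n -> X),
    forall x : X, exists c : 'I_n -> K,
      Xfin N (x - \sum_(i < n) c i *: v i).

Definition corollary5p11_statement : Prop :=
  forall (N : X -> \bar R) (tauF : set (set X)),
    is_extended_norm N ->
    finest_locally_convex_topology N tauF ->
    (metrizable tauF <-> finite_dim_quotient N).

End Defs.

Definition absC (R : realType) (z : R[i]) : R := complex.Re `|z|.

(* Main.v *)
Require Import Defs.
From HB Require Import structures.
From mathcomp Require Import all_boot all_order all_algebra.
From mathcomp Require Import complex.
From mathcomp Require Import boolp classical_sets reals constructive_ereal.
Set Implicit Arguments. Unset Strict Implicit. Unset Printing Implicit Defensive.
Import Order.TTheory GRing.Theory Num.Theory.
Local Open Scope classical_set_scope.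
Local Open Scope ring_scope.

Section LinAlg.
Variables (K : fieldType) (X : lmodType K).

Definition subsp (G : set X) :=
  [/\ G 0, (forall x y, G x -> G y -> G (x + y)) & (forall (a : K) x, G x -> G (a *: x))].

Lemma subspB G x y : subsp G -> G x -> G y -> G (x - y).
Proof. by case=> _ hD hZ gx gy; apply: hD => //; rewrite -scaleN1r; apply: hZ. Qed.

Lemma projection (G : set X) : subsp G -> exists pi : X -> X,
  [/\ (forall x y, pi (x + y) = pi x + pi y), (forall a x, pi (a *: x) = a *: pi x),
      (forall x, G (pi x)) & (forall x, G x -> pi x = x)].
Proof.
move=> sG; have [G0 GD GZ] := sG.
pose Q := [set A : set X | [/\ (forall x y, A x -> A y -> A (x + y)),
   (forall (a : K) x, A x -> A (a *: x)) & (forall x, A x -> G x -> x = 0)]].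
have [A [[AD AZ AG] Amax]] : exists A, Q A /\ forall B, A `<` B -> ~ Q B.
  apply: Zorn_bigcup => F FQ Ftot; split.
  - move=> x y [A1 FA1 xA1] [A2 FA2 yA2].
    have [A12|A21] := Ftot _ _ FA1 FA2.
    + exists A2 => //; have [h _ _] := FQ _ FA2; exact: h (A12 _ xA1) yA2.
    + exists A1 => //; have [h _ _] := FQ _ FA1; exact: h xA1 (A21 _ yA2).
  - move=> a x [A1 FA1 xA1]; exists A1 => //; have [_ h _] := FQ _ FA1; exact: h.
  - move=> x [A1 FA1 xA1]; have [_ _ h] := FQ _ FA1; exact: h.
pose A0 := fun c => A c \/ c = 0.
have A0D c1 c2 : A0 c1 -> A0 c2 -> A0 (c1 + c2).
  case=> [h1|->]; case=> [h2|->]; rewrite ?addr0 ?add0r; try by left; auto.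
  by right.
have A0Z a c : A0 c -> A0 (a *: c).
  by case=> [h|->]; [left; exact: AZ | right; rewrite scaler0].
have A0G c : A0 c -> G c -> c = 0 by case=> [h|->] // /(AG _ h).
have A00 : A0 0 by right.
have dec x : exists c, A0 c /\ G (x - c).
  apply: contrapT => hx.
  have nx c : A0 c -> ~ G (x - c) by move=> Ac Gc; apply: hx; exists c.
  pose B := [set y | exists c a, A0 c /\ y = c + a *: x].
  apply: (Amax B); last first.
    split.
    - move=> _ _ [c1 [a1 [h1 ->]]] [c2 [a2 [h2 ->]]]; exists (c1 + c2), (a1 + a2).
      split; first exact: A0D.
      by rewrite scalerDl addrACA.
    - move=> b _ [c [a [h ->]]]; exists (b *: c), (b * a); split; first exact: A0Z.
      by rewrite scalerDr scalerA.
    - move=> _ [c [a [h ->]]] Gy.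
      have [a00|a0] := eqVneq a 0.
        by rewrite a00 scale0r addr0 in Gy *; exact: A0G h Gy.
      exfalso; apply: (nx ((- a^-1) *: c)); first exact: A0Z.
      rewrite scaleNr opprK.
      have -> : x + a^-1 *: c = a^-1 *: (c + a *: x).
        by rewrite scalerDr scalerA mulVf // scale1r addrC.
      exact: GZ.
  split.
    by move=> y Ay; exists y, 0; split; [left | rewrite scale0r addr0].
  move=> BA; have: A x by apply: BA; exists 0, 1; split => //; rewrite add0r scale1r.
  by move=> Ax; apply: (nx x); [left | rewrite subrr].
have uniq x c c' : A0 c -> A0 c' -> G (x - c) -> G (x - c') -> c = c'.
  move=> h h' g g'; apply/eqP; rewrite -subr_eq0; apply/eqP/A0G.
    by apply: A0D => //; rewrite -scaleN1r; exact: A0Z.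
  have -> : c - c' = (x - c') - (x - c) by rewrite [RHS]addrC opprB addrA subrK.
  exact: subspB.
have [cc hcc] := choice dec.
exists (fun x => x - cc x); split.
- move=> x y; have -> : cc (x + y) = cc x + cc y; last by rewrite opprD addrACA.
  apply: (uniq (x + y)); first exact: (hcc _).1.
    by apply: A0D; [exact: (hcc _).1 | exact: (hcc _).1].
    exact: (hcc _).2.
  rewrite opprD addrACA; apply: GD; exact: (hcc _).2.
- move=> a x; have -> : cc (a *: x) = a *: cc x; last by rewrite scalerBr.
  apply: (uniq (a *: x)); first exact: (hcc _).1.
    by apply: A0Z; exact: (hcc _).1.
    exact: (hcc _).2.
  by rewrite -scalerBr; apply: GZ; exact: (hcc _).2.
- by move=> x; exact: (hcc _).2.
- move=> x Gx; have -> : cc x = 0; last by rewrite subr0.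
  apply: (uniq x); [exact: (hcc _).1 | exact: A00 | exact: (hcc _).2 | by rewrite subr0].
Qed.

Lemma hyperplane (G : set X) u : subsp G -> ~ G u -> exists phi : X -> K,
  [/\ (forall x y, phi (x + y) = phi x + phi y), (forall a x, phi (a *: x) = a * phi x),
      (forall x, G x -> phi x = 0) & phi u = 1].
Proof.
move=> sG nGu; have [G0 GD GZ] := sG.
pose G' := [set y | exists g a, G g /\ y = g + a *: u].
have sG' : subsp G'.
  split.
  - by exists 0, 0; rewrite scale0r addr0.
  - move=> _ _ [g1 [a1 [h1 ->]]] [g2 [a2 [h2 ->]]]; exists (g1 + g2), (a1 + a2).
    by split; [exact: GD | rewrite scalerDl addrACA].
  - move=> b _ [g [a [h ->]]]; exists (b *: g), (b * a).
    by split; [exact: GZ | rewrite scalerDr scalerA].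
have [pi [piD piZ piG pid]] := projection sG'.
have ex x : exists a, G (pi x - a *: u).
  by have [g [a [Gg ->]]] := piG x; exists a; rewrite addrK.
have uniq y a b : G (y - a *: u) -> G (y - b *: u) -> a = b.
  move=> ha hb; apply: contrapT => ab.
  have ba : b - a != 0 by rewrite subr_eq0; apply/eqP => e; apply: ab; rewrite e.
  apply: nGu; have -> : u = (b - a)^-1 *: ((y - a *: u) - (y - b *: u)).
    by rewrite [X in _ *: X]addrC opprB addrA subrK -scalerBl scalerA mulVf ?scale1r.
  by apply: GZ; apply: subspB.
have [phi hphi] := choice ex.
exists phi; split.
- move=> x y; apply: (uniq (pi (x + y))) => //.
  by rewrite piD scalerDl opprD addrACA; apply: GD.
- move=> a x; apply: (uniq (pi (a *: x))) => //.
  by rewrite piZ -scalerA -scalerBr; apply: GZ.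
- move=> x Gx; apply: (uniq (pi x)) => //.
  by rewrite scale0r subr0 pid //; exists x, 0; rewrite scale0r addr0.
- apply: (uniq (pi u)) => //.
  by rewrite scale1r pid ?subrr //; exists 0, 1; rewrite scale1r add0r.
Qed.

End LinAlg.
Fixpoint useq (T : Type) (f : seq T -> T) (k : nat) : seq T :=
  if k is k'.+1 then rcons (useq f k') (f (useq f k')) else [::].

Section Main.
Variables (R : realType) (K : numFieldType) (absK : K -> R) (X : lmodType K).
Hypotheses (absK_ge0 : forall a, 0 <= absK a) (absK0 : absK 0 = 0)
  (absK1 : absK 1 = 1)
  (absK_eq0 : forall a, absK a = 0 -> a = 0)
  (absKM : forall a b, absK (a * b) = absK a * absK b)
  (absKD : forall a b, absK (a + b) <= absK a + absK b)
  (absKN : forall a, absK (- a) = absK a)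
  (absK_surj : forall t, 0 <= t -> exists a, absK a = t).

Section Seminorm.
Variable p : X -> R.
Hypothesis hp : is_seminorm absK p.

Lemma sn_ge0 x : 0 <= p x. Proof. by case: hp. Qed.
Lemma snZ a x : p (a *: x) = absK a * p x. Proof. by case: hp. Qed.
Lemma snD x y : p (x + y) <= p x + p y. Proof. by case: hp. Qed.
Lemma sn0 : p 0 = 0.
Proof. by rewrite -(scale0r 0) snZ absK0 mul0r. Qed.
Lemma snN x : p (- x) = p x.
Proof. by rewrite -scaleN1r snZ absKN absK1 mul1r. Qed.
Lemma snB x y : p x <= p (x - y) + p y.
Proof. by rewrite -{1}(subrK y x); exact: snD. Qed.
Lemma sn_sum n (c : 'I_n -> K) (v : 'I_n -> X) :
  p (\sum_(i < n) c i *: v i) <= \sum_(i < n) absK (c i) * p (v i).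
Proof.
apply: (big_ind2 (fun a b => p a <= b)); first by rewrite sn0.
  by move=> x1 x2 y1 y2 h1 h2; apply: le_trans (snD _ _) (lerD h1 h2).
by move=> i _; rewrite snZ.
Qed.
End Seminorm.

Lemma sum_seq_ge (T : eqType) (s : seq T) (f : T -> R) :
  (forall x, x \in s -> 0 <= f x) -> forall x, x \in s -> f x <= \sum_(y <- s) f y.
Proof.
elim: s => [//|a s IH] h x; rewrite in_cons big_cons => /orP[/eqP ->|xs].
  rewrite lerDl big_seq; apply: sumr_ge0 => y ys.
  by apply: h; rewrite in_cons ys orbT.
rewrite (le_trans (IH _ x xs)) ?lerDr ?h ?mem_head //.
by move=> y ys; apply: h; rewrite in_cons ys orbT.
Qed.

Variable N : X -> \bar R.
Hypothesis hN : is_extended_norm absK N.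

Lemma N_ge0 x : (0 <= N x)%E. Proof. by case: hN. Qed.
Lemma enN0 : N 0 = 0%E. Proof. by case: hN => _ h _ _; apply/h. Qed.
Lemma N_eq0 x : N x = 0%E -> x = 0. Proof. by case: hN => _ h _ _ /h. Qed.
Lemma enNZ a x : N (a *: x) = ((absK a)%:E * N x)%E. Proof. by case: hN. Qed.
Lemma enND x y : (N (x + y) <= N x + N y)%E. Proof. by case: hN. Qed.

Lemma Xfin0 : Xfin N 0. Proof. by rewrite /Xfin /= enN0 ltry. Qed.
Lemma XfinD x y : Xfin N x -> Xfin N y -> Xfin N (x + y).
Proof. by move=> hx hy; apply: le_lt_trans (enND x y) _; apply: lte_add_pinfty. Qed.
Lemma Nfin x : Xfin N x -> N x = (fine (N x))%:E.
Proof. by move=> hx; rewrite fineK // ge0_fin_numE // N_ge0. Qed.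
Lemma XfinZ a x : Xfin N x -> Xfin N (a *: x).
Proof. by move=> hx; rewrite /Xfin /= enNZ (Nfin hx) -EFinM ltry. Qed.
Lemma XfinB x y : Xfin N x -> Xfin N y -> Xfin N (x - y).
Proof. by move=> hx hy; apply: XfinD => //; rewrite -scaleN1r; apply: XfinZ. Qed.
Lemma Xfin_sum n (c : 'I_n -> K) (v : 'I_n -> X) :
  (forall i, Xfin N (v i)) -> Xfin N (\sum_(i < n) c i *: v i).
Proof.
move=> h; apply: (big_ind (Xfin N)); [exact: Xfin0 | exact: XfinD |].
by move=> i _; apply: XfinZ.
Qed.

Definition nf x := fine (N x).
Lemma nf_ge0 x : 0 <= nf x. Proof. exact/fine_ge0/N_ge0. Qed.
Lemma nfD x y : Xfin N x -> Xfin N y -> nf (x + y) <= nf x + nf y.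
Proof.
move=> hx hy; rewrite -lee_fin EFinD /nf -!Nfin //; [exact: enND | exact: XfinD].
Qed.
Lemma nfZ a x : Xfin N x -> nf (a *: x) = absK a * nf x.
Proof. by move=> hx; rewrite /nf enNZ (Nfin hx) -EFinM. Qed.
Lemma nf_eq0 x : Xfin N x -> nf x = 0 -> x = 0.
Proof. by move=> hx h; apply: N_eq0; rewrite (Nfin hx) -/(nf x) h. Qed.

Lemma open_lt1 (P : set (X -> R)) p : (forall p, P p -> is_seminorm absK p) ->
  P p -> seminorm_topology P [set y | p y < 1].
Proof.
move=> hP Pp x /= px; exists [:: p], (1 - p x); split.
- by move=> q; rewrite inE => /eqP ->.
- by rewrite subr_gt0.
- move=> y /= /(_ p (mem_head _ _)) h.
  by apply: le_lt_trans (snB (hP _ Pp) y x) _; rewrite -ltrBrDr.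
Qed.

Lemma cont_sn (P : set (X -> R)) p : (forall p, P p -> is_seminorm absK p) ->
  coarser (seminorm_topology P) (enorm_topology N) -> P p ->
  forall e, 0 < e -> exists2 d, 0 < d & forall z, (N z < d%:E)%E -> p z < e.
Proof.
move=> hP hc Pp e e0; have hp := hP _ Pp.
have h0 : [set y | p y < 1] 0 by rewrite /= sn0 // ltr01.
have [d d0 hd] := hc _ (open_lt1 hP Pp) 0 h0.
exists (d * e); first exact: mulr_gt0.
move=> z Nz; have ie : 0 <= e^-1 by rewrite invr_ge0 ltW.
have [a ha] := absK_surj ie.
have : p (a *: z) < 1.
  apply: (hd (a *: z)); rewrite /= subr0 enNZ ha.
  have hz : Xfin N z by apply: lt_trans Nz (ltry _).
  rewrite (Nfin hz) -EFinM lte_fin in Nz *.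
  by rewrite lte_fin mulrC ltr_pdivrMr.
by rewrite snZ // ha -ltr_pdivlMl ?invr_gt0 // invrK mulr1.
Qed.


Lemma fd_metrizable tauF : finest_locally_convex_topology absK N tauF ->
  finite_dim_quotient N -> metrizable R tauF.
Proof.
move=> [[P [hP tauFE]] hc hfin] [n0 [v0 hv0]].
have hc' : coarser (seminorm_topology P) (enorm_topology N) by rewrite -tauFE.
pose spans n := exists v : 'I_n -> X, forall x, exists c : 'I_n -> K,
  Xfin N (x - \sum_(i < n) c i *: v i).
have [m [[v hv] hmin]] : exists m, spans m /\ forall k, (k < m)%N -> ~ spans k.
  have : spans n0 by exists v0.
  elim/ltn_ind: n0 {v0 hv0} => n IH sn.
  case: (pselect (exists k, (k < n)%N /\ spans k)) => [[k [kn sk]]|h].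
    exact: IH kn sk.
  by exists n; split => // k kn sk; apply: h; exists k.
have indep : forall c : 'I_m -> K, Xfin N (\sum_(i < m) c i *: v i) -> forall i, c i = 0.
  move=> c hc0 j; apply: contrapT => cj.
  have cj' : c j != 0 by apply/eqP.
  apply: (hmin m.-1); first by rewrite ltn_predL (leq_ltn_trans (leq0n _) (ltn_ord j)).
  exists (fun k => v (lift j k)) => x; have [d hd] := hv x.
  pose t := d j / c j.
  exists (fun k => d (lift j k) - t * c (lift j k)).
  have e0 : d j - t * c j = 0 by rewrite /t mulfVK ?subrr.
  have -> : \sum_(k < m.-1) (d (lift j k) - t * c (lift j k)) *: v (lift j k)
         = \sum_(i < m) (d i - t * c i) *: v i.
    by rewrite (bigD1_ord j) //= e0 scale0r add0r.
  have -> : \sum_(i < m) (d i - t * c i) *: v i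
         = \sum_(i < m) d i *: v i - t *: \sum_(i < m) c i *: v i.
    by rewrite scaler_sumr -sumrB; apply: eq_bigr => i _; rewrite scalerBl scalerA.
  rewrite opprB addrA addrAC; apply: XfinD => //; exact: XfinZ.
have [cf hcf] := choice hv.
have cuniq x c c' : Xfin N (x - \sum_(i < m) c i *: v i) ->
    Xfin N (x - \sum_(i < m) c' i *: v i) -> c = c'.
  move=> h h'; apply/funext => i; apply/eqP; rewrite -subr_eq0; apply/eqP.
  apply: (indep (fun i => c i - c' i)).
  have -> : \sum_(i < m) (c i - c' i) *: v i
         = (x - \sum_(i < m) c' i *: v i) - (x - \sum_(i < m) c i *: v i).
    rewrite [RHS]addrC opprB addrA subrK -sumrB; apply: eq_bigr => k _; exact: scalerBl.
  exact: XfinB.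
have cfD x y : cf (x + y) = (fun i => cf x i + cf y i).
  apply: (cuniq (x + y)); first exact: hcf.
  have -> : \sum_(i < m) (cf x i + cf y i) *: v i
         = \sum_(i < m) cf x i *: v i + \sum_(i < m) cf y i *: v i.
    by rewrite -big_split; apply: eq_bigr => i _; rewrite scalerDl.
  by rewrite opprD addrACA; apply: XfinD; apply: hcf.
have cfZ a x : cf (a *: x) = (fun i => a * cf x i).
  apply: (cuniq (a *: x)); first exact: hcf.
  have -> : \sum_(i < m) (a * cf x i) *: v i = a *: \sum_(i < m) cf x i *: v i.
    by rewrite scaler_sumr; apply: eq_bigr => i _; rewrite scalerA.
  by rewrite -scalerBr; apply: XfinZ; apply: hcf.
have cf0 x : Xfin N x -> cf x = (fun _ => 0).
  move=> hx; apply: (cuniq x); first exact: hcf.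
  by rewrite big1 ?subr0 // => i _; rewrite scale0r.
pose rr x := x - \sum_(i < m) cf x i *: v i.
pose q x := nf (rr x) + \sum_(i < m) absK (cf x i).
have rrD x y : rr (x + y) = rr x + rr y.
  rewrite /rr cfD /=.
  have -> : \sum_(i < m) (cf x i + cf y i) *: v i
         = \sum_(i < m) cf x i *: v i + \sum_(i < m) cf y i *: v i.
    by rewrite -big_split; apply: eq_bigr => i _; rewrite scalerDl.
  by rewrite opprD addrACA.
have rrZ a x : rr (a *: x) = a *: rr x.
  rewrite /rr cfZ /= scalerBr scaler_sumr; congr (_ - _).
  by apply: eq_bigr => i _; rewrite scalerA.
have hq : is_seminorm absK q.
  split.
  - move=> x; apply: addr_ge0; [exact: nf_ge0 | apply: sumr_ge0 => i _; exact: absK_ge0].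
  - move=> a x; rewrite /q rrZ (nfZ _ (hcf x)) cfZ /= mulrDr mulr_sumr; congr (_ + _).
    by apply: eq_bigr => i _; exact: absKM.
  - move=> x y; rewrite /q rrD cfD /= [X in _ <= X]addrACA; apply: lerD; first exact: nfD (hcf x) (hcf y).
    by rewrite -big_split; apply: ler_sum => i _; exact: absKD.
have q_fin z : Xfin N z -> q z = nf z.
  move=> hz; rewrite /q /rr cf0 //.
  rewrite big1 => [|i _]; last by rewrite scale0r.
  by rewrite subr0 big1 ?addr0 // => i _.
have q_def z : q z = 0 -> z = 0.
  move=> /eqP; rewrite /q paddr_eq0 ?nf_ge0 //; last by apply: sumr_ge0 => i _.
  move=> /andP[/eqP h1 /eqP h2].
  have c0 : cf z = (fun _ => 0).
    apply/funext => i; apply: absK_eq0.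
    exact: (psumr_eq0P (fun i _ => absK_ge0 (cf z i)) h2).
  have rz : rr z = z by rewrite /rr c0 big1 ?subr0 // => i _; rewrite scale0r.
  by apply: nf_eq0; [rewrite -rz; exact: hcf | rewrite -rz].
have one p : P p -> forall e, 0 < e ->
    exists2 e', 0 < e' & forall z, q z < e' -> p z < e.
  move=> Pp e e0; have hp := hP _ Pp.
  have e20 : 0 < e / 2 by rewrite divr_gt0.
  have [del del0 hdel] := cont_sn hP hc' Pp e20.
  pose M := \sum_(i < m) p (v i).
  have M0 : 0 <= M. apply: sumr_ge0 => i _. exact: (sn_ge0 hp (v i)).
  have M1 : 0 < M + 1 by rewrite (le_lt_trans M0) // ltrDl ltr01.
  exists (Num.min del (e / 2 / (M + 1))); first by rewrite lt_min del0 !divr_gt0.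
  move=> z; rewrite lt_min => /andP[qd qe].
  have rz : Xfin N (rr z) := hcf z.
  have h1 : p (rr z) < e / 2.
    apply: hdel; rewrite (Nfin rz) lte_fin; apply: le_lt_trans qd.
    by rewrite /q lerDl; apply: sumr_ge0 => i _; exact: absK_ge0.
  have h2 : p (\sum_(i < m) cf z i *: v i) <= e / 2.
    apply: le_trans (sn_sum hp _ _) _.
    have hS : \sum_(i < m) absK (cf z i) <= q z by rewrite /q lerDr nf_ge0.
    apply: (@le_trans _ _ ((\sum_(i < m) absK (cf z i)) * M)).
      rewrite mulr_suml; apply: ler_sum => i _; apply: ler_wpM2l => //.
      rewrite /M (bigD1 i) //= lerDl; apply: sumr_ge0 => k _; exact: (sn_ge0 hp _).
    apply: (@le_trans _ _ ((e / 2 / (M + 1)) * (M + 1))); last by rewrite divfK // gt_eqF.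
    apply: ler_pM => //; first by apply: sumr_ge0 => i _.
      exact: le_trans hS (ltW qe).
    by rewrite lerDl ler01.
  have -> : z = rr z + \sum_(i < m) cf z i *: v i by rewrite /rr subrK.
  apply: le_lt_trans (snD hp _ _) _.
  by apply: lt_le_trans (ltr_leD h1 h2) _; rewrite -splitr.
have many (s : seq (X -> R)) : (forall p, p \in s -> P p) -> forall e, 0 < e ->
    exists2 e', 0 < e' & forall z, q z < e' -> forall p, p \in s -> p z < e.
  elim: s => [|p s IH] sP e e0.
    by exists 1 => // z _ p; rewrite in_nil.
  have [e1 e10 h1] := one p (sP p (mem_head _ _)) e e0.
  have sP' : forall p', p' \in s -> P p'.
    by move=> p' hp'; apply: sP; rewrite in_cons hp' orbT.
  have [e2 e20 h2] := IH sP' e e0.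
  exists (Num.min e1 e2); first by rewrite lt_min e10 e20.
  move=> z; rewrite lt_min => /andP[z1 z2] p'; rewrite in_cons => /orP[/eqP ->|p's].
    exact: h1.
  exact: h2.
exists (fun x y => q (y - x)); split.
  split.
  - by move=> x y; case: hq => h _ _; apply: h.
  - move=> x y; split => [/q_def/eqP|->].
      by rewrite subr_eq0 => /eqP.
    by rewrite subrr; exact: sn0 hq.
  - by move=> x y; rewrite -opprB snN.
  - move=> x y z; have -> : z - x = (z - y) + (y - x) by rewrite addrA subrK.
    by rewrite [X in _ <= X]addrC; exact: snD.
apply/seteqP; split.
  move=> U; rewrite tauFE => hU x Ux; have [s [e [sP e0 hs]]] := hU x Ux.
  have [e' e'0 he'] := many s sP e e0.
  by exists e' => // y /= hy; apply: hs => p ps /=; exact: he' hy p ps.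
move=> U hU; apply: (hfin (seminorm_topology [set q])).
- by exists [set q]; split => // p ->.
- move=> V hV x Vx; have [s [e [sq e0 hs]]] := hV x Vx.
  exists e => // y /= hy; apply: hs => p ps; rewrite (sq p ps).
  have hy' : Xfin N (y - x) by apply: lt_trans hy (ltry _).
  by rewrite q_fin //; rewrite (Nfin hy') lte_fin in hy.
- move=> x Ux; have [e e0 he] := hU x Ux; exists [:: q], e; split => //.
    by move=> p; rewrite inE => /eqP.
  by move=> y /= hy; apply: he; exact: hy q (mem_head _ _).
Qed.

Lemma metrizable_fd tauF : finest_locally_convex_topology absK N tauF ->
  metrizable R tauF -> finite_dim_quotient N.
Proof.
move=> [[P [hP tauFE]] hcoarse hfin] [d [[d0 d_eq0 dsym dtri] tauFd]].
apply: contrapT => nfd.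
pose B (k : nat) := [set y | d 0 y < (k.+1%:R)^-1].
have Bopen k : metric_topology d (B k).
  move=> y /= hy; exists ((k.+1%:R)^-1 - d 0 y); first by rewrite subr_gt0.
  by move=> z /= hz; apply: le_lt_trans (dtri 0 y z) _; rewrite -ltrBrDl.
have hW k : exists se : seq (X -> R) * R, [/\ forall p, p \in se.1 -> P p, 0 < se.2 &
    [set y | forall p, p \in se.1 -> p y < se.2] `<=` B k].
  have : seminorm_topology P (B k) by rewrite -tauFE tauFd; exact: Bopen.
  move=> /(_ 0) [].
    by rewrite /B /= (proj2 (d_eq0 0 0) erefl) invr_gt0 ltr0n.
  move=> s [e [sP e0 hs]]; exists (s, e); split => // y hy; apply: hs => p ps.
  by rewrite subr0; exact: hy.
have [se hse] := choice hW.
have hnext : forall s : seq X, exists x, forall c : nat -> K,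
    ~ Xfin N (x - \sum_(0 <= i < size s) c i *: nth 0 s i).
  move=> s; apply: contrapT => h; apply: nfd.
  exists (size s), (fun i => nth 0 s i) => x; apply: contrapT => hx; apply: h.
  exists x => c hc; apply: hx; exists (fun i => c i).
  by rewrite big_mkord in hc.
have [nxt hnxt] := choice hnext.
pose u k := nxt (useq nxt k).
have size_useq k : size (useq nxt k) = k.
  by elim: k => [//|k IH] /=; rewrite size_rcons IH.
have nth_useq k i : (i < k)%N -> nth 0 (useq nxt k) i = u i.
  elim: k => [//|k IH] ik /=; rewrite nth_rcons size_useq.
  have [/IH //|ki] := ltnP i k.
  have ik' : i = k by apply/eqP; rewrite eqn_leq ki andbT -ltnS.
  by rewrite ik' eqxx.
pose F k := [set x | exists c : nat -> K, Xfin N (x - \sum_(0 <= i < k) c i *: u i)].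
have uF k : ~ F k (u k).
  move=> [c hc0]; apply: (hnxt (useq nxt k) c); rewrite size_useq.
  have -> : \sum_(0 <= i < k) c i *: nth 0 (useq nxt k) i = \sum_(0 <= i < k) c i *: u i.
    by apply: eq_big_nat => i /andP[_ ik]; rewrite nth_useq.
  exact: hc0.
have Fmono m k : (m <= k)%N -> F m `<=` F k.
  move=> mk x [c hc0]; exists (fun i => if (i < m)%N then c i else 0).
  have -> : \sum_(0 <= i < k) (if (i < m)%N then c i else 0) *: u i
         = \sum_(0 <= i < m) c i *: u i.
    rewrite (big_cat_nat (leq0n m) mk) /= [X in _ + X]big1_seq ?addr0.
      by apply: eq_big_nat => i /andP[_ im]; rewrite im.
    by move=> i /andP[_]; rewrite mem_index_iota => /andP[mi _]; rewrite ltnNge mi scale0r.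
  exact: hc0.
have sF k : subsp (F k).
  split.
  - exists (fun _ => 0); rewrite big1 => [|i _]; [rewrite subrr; exact: Xfin0 | exact: scale0r].
  - move=> x y [c1 h1] [c2 h2]; exists (fun i => c1 i + c2 i).
    have -> : \sum_(0 <= i < k) (c1 i + c2 i) *: u i
           = \sum_(0 <= i < k) c1 i *: u i + \sum_(0 <= i < k) c2 i *: u i.
      by rewrite -big_split; apply: eq_bigr => i _; rewrite scalerDl.
    by rewrite opprD addrACA; apply: XfinD.
  - move=> a x [c h]; exists (fun i => a * c i).
    have -> : \sum_(0 <= i < k) (a * c i) *: u i = a *: \sum_(0 <= i < k) c i *: u i.
      by rewrite scaler_sumr; apply: eq_bigr => i _; rewrite scalerA.
    by rewrite -scalerBr; apply: XfinZ.
pose Fall := [set x | exists k, F k x].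
have sFall : subsp Fall.
  split.
  - by exists 0%N; case: (sF 0%N).
  - move=> x y [k1 h1] [k2 h2]; exists (maxn k1 k2); case: (sF (maxn k1 k2)) => _ hD _.
    by apply: hD; [apply: (Fmono k1) h1; exact: leq_maxl | apply: (Fmono k2) h2; exact: leq_maxr].
  - by move=> a x [k h]; exists k; case: (sF k) => _ _ hZ; apply: hZ.
have XF0 x : Xfin N x -> F 0%N x.
  by move=> hx; exists (fun _ => 0); rewrite big_geq // subr0.
have uFall k : Fall (u k).
  exists k.+1; exists (fun i => if i == k then 1 else 0).
  rewrite big_nat_recr //= eqxx scale1r big1_seq => [|i]; first by rewrite add0r subrr; exact: Xfin0.
  move=> /andP[_]; rewrite mem_index_iota => /andP[_ ik].
  by rewrite (ltn_eqF ik) scale0r.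
have [pi [piD piZ piF pid]] := projection sFall.
pose G k := [set x | F k (pi x)].
have sG k : subsp (G k).
  have [F0 FD FZ] := sF k.
  split.
  - by rewrite /G /= -(scale0r 0) piZ scale0r.
  - by move=> x y hx hy; rewrite /G /= piD; apply: FD.
  - by move=> a x hx; rewrite /G /= piZ; apply: FZ.
have uG k : ~ G k (u k) by rewrite /G /= pid //; exact: uF.
have hpsi k := hyperplane (sG k) (uG k).
have [psi hpsiP] := choice hpsi.
have psiD k x y : psi k (x + y) = psi k x + psi k y by case: (hpsiP k).
have psiZ k a x : psi k (a *: x) = a * psi k x by case: (hpsiP k).
have psiG k x : G k x -> psi k x = 0 by case: (hpsiP k) => _ _ h _; apply: h.
have psiu k : psi k (u k) = 1 by case: (hpsiP k).
have [mx hmx] := choice piF.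
have psi_van x k : (mx x <= k)%N -> psi k x = 0.
  move=> h; apply: psiG; apply: (Fmono (mx x)) => //; exact: hmx.
pose s_ k := (se k).1.
pose e_ k := (se k).2.
pose M k := \sum_(p <- s_ k) p (u k) + 1.
have sP k p : p \in s_ k -> P p by case: (hse k) => h _ _; apply: h.
have e0 k : 0 < e_ k by case: (hse k).
have M0 k : 0 < M k.
  rewrite /M ltr_wpDl // big_seq; apply: sumr_ge0 => p ps.
  exact: (sn_ge0 (hP _ (sP k p ps)) _).
pose w k := 2 * M k / e_ k.
have w0 k : 0 <= w k by rewrite /w ltW // divr_gt0 // mulr_gt0.
pose r x := \sum_(0 <= k < mx x) w k * absK (psi k x).
have r_eq x n : (mx x <= n)%N -> r x = \sum_(0 <= k < n) w k * absK (psi k x).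
  move=> h; rewrite /r (big_cat_nat (leq0n _) h) /= [X in _ = _ + X]big1_seq ?addr0 //.
  by move=> k /andP[_]; rewrite mem_index_iota => /andP[hk _]; rewrite psi_van // absK0 mulr0.
have hr : is_seminorm absK r.
  split.
  - by move=> x; apply: sumr_ge0 => k _; apply: mulr_ge0.
  - move=> a x; pose n := maxn (mx (a *: x)) (mx x).
    rewrite (r_eq (a *: x) n) ?leq_maxl // (r_eq x n) ?leq_maxr // mulr_sumr.
    by apply: eq_bigr => k _; rewrite psiZ absKM mulrCA.
  - move=> x y; pose n := maxn (mx (x + y)) (maxn (mx x) (mx y)).
    rewrite (r_eq (x + y) n) ?leq_maxl //.
    rewrite (r_eq x n) ?(leq_trans (leq_maxl _ _) (leq_maxr _ _)) //.
    rewrite (r_eq y n) ?(leq_trans (leq_maxr _ _) (leq_maxr _ _)) //.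
    rewrite -big_split; apply: ler_sum => k _; rewrite psiD /= -mulrDr.
    by apply: ler_wpM2l => //; exact: absKD.
have r_fin x : Xfin N x -> r x = 0.
  move=> hx; rewrite /r big1 // => k _.
  rewrite psiG ?absK0 ?mulr0 //; rewrite /G /= pid; last by exists 0%N; exact: XF0.
  by apply: (Fmono 0%N) => //; exact: XF0.
have r_u k : w k <= r (u k).
  rewrite (r_eq (u k) (maxn (mx (u k)) k.+1)) ?leq_maxl //.
  have := @sum_seq_ge _ (index_iota 0 (maxn (mx (u k)) k.+1))
    (fun j => w j * absK (psi j (u k))) _ k.
  rewrite psiu absK1 mulr1; apply.
    by move=> j _; apply: mulr_ge0.
  by rewrite mem_index_iota leq0n /= leq_max ltnSn orbT.
have Vt : tauF [set y | r y < 1].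
  apply: (hfin (seminorm_topology [set r])).
  - by exists [set r]; split => // p ->.
  - move=> V hV x Vx; have [s [e [sq e0' hs]]] := hV x Vx.
    exists 1 => // y /= hy; apply: hs => p ps; rewrite (sq p ps).
    have hy' : Xfin N (y - x) by apply: lt_trans hy (ltry _).
    by rewrite r_fin.
  - by apply: open_lt1 => // p ->.
move: Vt; rewrite tauFd => /(_ 0) [].
  by rewrite /= (r_fin _ Xfin0) ltr01.
move=> eps eps0 heps.
have ieps : 0 <= eps^-1 by rewrite invr_ge0 ltW.
pose k := Num.bound (eps^-1).
have kB : (k.+1%:R)^-1 < eps.
  rewrite invf_plt ?posrE ?ltr0n //; apply: lt_le_trans (archi_boundP ieps) _.
  by rewrite ler_nat.
have [a ha] := absK_surj (ltW (divr_gt0 (e0 k) (mulr_gt0 (ltr0n _ 2) (M0 k)))).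
have Wy : B k (a *: u k).
  case: (hse k) => _ _; apply => p ps /=; have hp := hP _ (sP k p ps).
  rewrite (snZ hp) ha; apply: (@le_lt_trans _ _ (e_ k / (2 * M k) * M k)).
    apply: ler_wpM2l; first by rewrite ltW // divr_gt0 // mulr_gt0.
    apply: (@le_trans _ _ (\sum_(p <- s_ k) p (u k))); last by rewrite lerDl.
    apply: sum_seq_ge => // p' p's; exact: (sn_ge0 (hP _ (sP k p' p's)) _).
  rewrite invfM mulrA mulrAC -mulrA divff ?gt_eqF // mulr1 ltr_pdivrMr //.
  by rewrite ltr_pMr // ltr1n.
have : r (a *: u k) < 1 by apply: heps; rewrite /=; apply: lt_trans kB; exact: Wy.
apply/negP; rewrite -leNgt (snZ hr) ha.
apply: (@le_trans _ _ (e_ k / (2 * M k) * w k)); last first.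
  by apply: ler_wpM2l => //; rewrite ltW // divr_gt0 // mulr_gt0.
by rewrite /w mulrA divfK ?divff // gt_eqF // mulr_gt0.
Qed.

End Main.

Lemma generic_stmt (R : realType) (K : numFieldType) (absK : K -> R) (X : lmodType K) :
  (forall a, 0 <= absK a) -> absK 0 = 0 -> absK 1 = 1 ->
  (forall a, absK a = 0 -> a = 0) ->
  (forall a b, absK (a * b) = absK a * absK b) ->
  (forall a b, absK (a + b) <= absK a + absK b) ->
  (forall a, absK (- a) = absK a) ->
  (forall t, 0 <= t -> exists a, absK a = t) ->
  corollary5p11_statement absK X.
Proof.
move=> h1 h2 h3 h4 h5 h6 h7 h8 N tauF hN hF; split => h.
  exact: (metrizable_fd h1 h2 h3 h5 h6 h8 hN hF h).
exact: (fd_metrizable h1 h2 h3 h4 h5 h6 h7 h8 hN hF h).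
Qed.

Section Cplx.
Variable R : realType.
Local Open Scope complex_scope.
Lemma absCE (z : R[i]) : (absC z)%:C = `|z|.
Proof. by rewrite /absC normc_def. Qed.
End Cplx.

Theorem corollary5p11 (R : realType) :
  (forall X : lmodType R,
     corollary5p11_statement (fun a : R => `|a|) X) /\
  (forall X : lmodType R[i],
     corollary5p11_statement (@absC R) X).
Proof.
split => X; apply: generic_stmt.
- by move=> a; exact: normr_ge0.
- exact: normr0.
- exact: normr1.
- by move=> a /normr0_eq0.
- by move=> a b; exact: normrM.
- by move=> a b; exact: ler_normD.
- by move=> a; exact: normrN.
- by move=> t t0; exists t; rewrite ger0_norm.
- by move=> a; rewrite -(@ler0c R) absCE.
- by apply: (@complexI R); rewrite absCE normr0.
- by apply: (@complexI R); rewrite absCE normr1.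
- by move=> a h; apply: normr0_eq0; rewrite -absCE h.
- by move=> a b; apply: (@complexI R); rewrite rmorphM /= !absCE normrM.
- by move=> a b; rewrite -(@lecR R) rmorphD /= !absCE ler_normD.
- by move=> a; apply: (@complexI R); rewrite !absCE normrN.
- move=> t t0; exists (t%:C)%C; apply: (@complexI R); rewrite absCE ger0_norm //.
  by rewrite ler0c.
Qed.
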